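(* Let $G\subseteq\mathrm{GL}_n(\mathbb{R})$ be a finite group and let $H$ be a broad subgroup of $G$. Then every ring homomorphism $\phi:\mathbb{R}[\underline{X}]^G\to\mathbb{R}$ of principal orbit type extends to a ring homomorphism $\tilde\phi:\mathbb{R}[\underline{X}]^H\to\mathbb{R}$.
   Context: $\mathbb{R}[\underline{X}]=\mathbb{R}[X_1,\dots,X_n]$; $\mathbb{R}[\underline{X}]^K$ is the ring of polynomials invariant under a subgroup $K$. An elementary abelian $2$-subgroup $H$ of $G$ is broad if every involution of $G$ is conjugate in $G$ to an element of $H$. Every ring homomorphism $\phi:\mathbb{R}[\underline{X}]^G\to\mathbb{R}$ extends to a homomorphism $\mathbb{R}[\underline{X}]\to\mathbb{C}$, i.e. is evaluation at some point $x\in\mathbb{C}^n$, and these points form a single $G$-orbit. $\phi$ is of principal orbit type if such a point $x$ has trivial stabilizer in $G$. *)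

(* Defs.v *)
From HB Require Import structures.
From mathcomp Require Import all_boot all_order all_algebra.
From mathcomp Require Import mpoly.
From mathcomp Require Import complex.
From mathcomp Require Import Rstruct.
From Stdlib Require Import Rdefinitions.

Set Implicit Arguments.
Unset Strict Implicit.
Unset Printing Implicit Defensive.

Import Order.TTheory GRing.Theory Num.Theory.
Local Open Scope ring_scope.

Notation RR := Rdefinitions.R.

(* A finite subgroup of GL_n(R), given by the (finite) list of its elements:
   contains the identity, consists of invertible matrices, closed under
   products (finiteness then gives closure under inverses). *)
Definition is_finite_matrix_group (n : nat) (G : seq 'M[RR]_n) : Prop :=
  [/\ 1%:M \in G,
      (forall g, g \in G -> g \in unitmx) &
      (forall g h, g \in G -> h \in G -> g *m h \in G)].

Definition is_subgroup (n : nat) (H G : seq 'M[RR]_n) : Prop :=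
  is_finite_matrix_group H /\ {subset H <= G}.

Definition is_elem_abelian_2 (n : nat) (H : seq 'M[RR]_n) : Prop :=
  (forall h, h \in H -> h *m h = 1%:M) /\
  (forall h k, h \in H -> k \in H -> h *m k = k *m h).

Definition is_involution (n : nat) (g : 'M[RR]_n) : Prop :=
  g *m g = 1%:M /\ g <> 1%:M.

Definition broad (n : nat) (G H : seq 'M[RR]_n) : Prop :=
  [/\ is_subgroup H G, is_elem_abelian_2 H &
      forall g, g \in G -> is_involution g ->
        exists2 k, k \in G & invmx k *m g *m k \in H].

(* Linear action of a matrix on R[X_1..X_n]: (g.p)(x) = p(g x). *)
Definition mat_act (n : nat) (g : 'M[RR]_n) (p : {mpoly RR[n]}) : {mpoly RR[n]} :=
  p \mPo [tuple (\sum_(j < n) g i j *: 'X_j) | i < n].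

Definition is_invariant (n : nat) (K : seq 'M[RR]_n) (p : {mpoly RR[n]}) : Prop :=
  forall g, g \in K -> mat_act g p = p.

(* phi : R[X]^K -> R is a ring homomorphism; phi is given as a function on
   all polynomials, only its values on K-is_invariant polynomials matter. *)
Definition ring_hom_on_invariants (n : nat) (K : seq 'M[RR]_n)
    (phi : {mpoly RR[n]} -> RR) : Prop :=
  [/\ phi 1 = 1,
      (forall p q, is_invariant K p -> is_invariant K q -> phi (p + q) = phi p + phi q) &
      (forall p q, is_invariant K p -> is_invariant K q -> phi (p * q) = phi p * phi q)].

Definition ceval (n : nat) (x : 'I_n -> RR[i]) (p : {mpoly RR[n]}) : RR[i] :=
  (map_mpoly (real_complex RR) p).@[x].

Definition mat_act_pt (n : nat) (g : 'M[RR]_n) (x : 'I_n -> RR[i]) : 'I_n -> RR[i] :=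
  fun i => \sum_(j < n) real_complex RR (g i j) * x j.

Definition principal_orbit_type (n : nat) (G : seq 'M[RR]_n)
    (phi : {mpoly RR[n]} -> RR) : Prop :=
  exists x : 'I_n -> RR[i],
    (forall p, is_invariant G p -> ceval x p = real_complex RR (phi p)) /\
    (forall g, g \in G -> mat_act_pt g x =1 x -> g = 1%:M).

(* Main.v *)
Require Import Defs.
From HB Require Import structures.
From mathcomp Require Import all_boot all_order all_algebra.
From mathcomp Require Import mpoly complex Rstruct.
Set Implicit Arguments. Unset Strict Implicit. Unset Printing Implicit Defensive.
Import Order.TTheory GRing.Theory Num.Theory.
Local Open Scope ring_scope.

Notation rc := (real_complex RR).
Definition tup (n : nat) (g : 'M[RR]_n) : n.-tuple {mpoly RR[n]} :=
  [tuple (\sum_(j < n) g i j *: 'X_j) | i < n].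

Lemma mat_actE n (g : 'M[RR]_n) p : mat_act g p = comp_mpoly (tup g) p.
Proof. by []. Qed.

Lemma ceval_act n (g : 'M[RR]_n) x p :
  ceval x (mat_act g p) = ceval (mat_act_pt g x) p.
Proof.
rewrite /ceval /mat_act map_mpoly_comp; last exact: complexI.
rewrite comp_mpoly_meval; apply: meval_eq => i.
rewrite tnth_map tnth_mktuple.
rewrite [map_mpoly _ _]raddf_sum raddf_sum /mat_act_pt.
apply: eq_bigr => j _.
by rewrite /= map_mpolyZ map_mpolyX mevalZ mevalXU.
Qed.

Lemma act_pt_mul n (g h : 'M[RR]_n) x :
  mat_act_pt (g *m h) x =1 mat_act_pt g (mat_act_pt h x).
Proof.
move=> i; rewrite /mat_act_pt.
under eq_bigr do rewrite mxE rmorph_sum mulr_suml.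
rewrite exchange_big /=; apply: eq_bigr => k _.
rewrite mulr_sumr; apply: eq_bigr => j _.
by rewrite rmorphM mulrA.
Qed.

Lemma act_pt1 n x : mat_act_pt (1%:M : 'M[RR]_n) x =1 x.
Proof.
move=> i; rewrite /mat_act_pt (bigD1 i) //= big1 ?addr0.
  by rewrite mxE eqxx rmorph1 mul1r.
by move=> j ji; rewrite mxE eq_sym (negPf ji) rmorph0 mul0r.
Qed.

Definition conjx n (x : 'I_n -> RR[i]) : 'I_n -> RR[i] := fun i => (x i)^*%C.

Lemma conj_rc (a : RR) : (rc a)^*%C = rc a.
Proof. by rewrite /conjc /real_complex_def /= oppr0. Qed.

Lemma act_pt_conj n (g : 'M[RR]_n) x :
  mat_act_pt g (conjx x) =1 conjx (mat_act_pt g x).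
Proof.
move=> i; rewrite /conjx /mat_act_pt rmorph_sum; apply: eq_bigr => j _.
by rewrite rmorphM; congr (_ * _); rewrite -[LHS]conj_rc.
Qed.

Lemma ceval_conj n (x : 'I_n -> RR[i]) p :
  ceval (conjx x) p = (ceval x p)^*%C.
Proof.
rewrite /ceval !mevalE rmorph_sum; apply: eq_bigr => m _.
rewrite rmorphM rmorph_prod mcoeff_map_mpoly; congr (_ * _); first by rewrite -[LHS]conj_rc.
by apply: eq_bigr => i _; rewrite rmorphXn.
Qed.

Lemma mat_act_comp n (a h : 'M[RR]_n) p :
  mat_act a (mat_act h p) = mat_act (h *m a) p.
Proof.
rewrite /mat_act [p \mPo _]comp_mpolyEX raddf_sum [RHS]comp_mpolyEX.
apply: eq_bigr => m _; rewrite /= comp_mpolyZ; congr (_ *: _).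
rewrite !comp_mpolyX rmorph_prod.
apply: eq_bigr => i _; rewrite rmorphXn; congr (_ ^+ _).
rewrite !tnth_mktuple raddf_sum /=.
under eq_bigr do rewrite comp_mpolyZ comp_mpolyXU -tnth_nth tnth_mktuple scaler_sumr.
rewrite exchange_big /=; apply: eq_bigr => k _.
rewrite mxE scaler_suml; apply: eq_bigr => j _.
by rewrite scalerA.
Qed.

Lemma exists_nonroot (P : {poly RR[i]}) : P != 0 -> exists t : RR, P.[rc t] != 0.
Proof.
move=> P0.
pose rs := [seq rc (k%:R) | k <- iota 0 (size P)].
case Hall: (all (root P) rs).
  have urs : uniq rs.
    rewrite map_inj_uniq ?iota_uniq // => k1 k2 /complexI /eqP.
    by rewrite eqr_nat => /eqP.
  have := max_poly_roots P0 Hall urs.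
  by rewrite size_map size_iota ltnn.
move/negbT: Hall => /allPn [c /mapP [k _ ->] Hk].
by exists k%:R.
Qed.

Definition lin n (t : RR) : {mpoly RR[n]} := \sum_(j < n) (t ^+ j) *: 'X_j.

Lemma ceval_lin n (z : 'I_n -> RR[i]) t :
  ceval z (lin n t) = \sum_(j < n) z j * (rc t) ^+ j.
Proof.
rewrite /ceval /lin [map_mpoly _ _]raddf_sum raddf_sum; apply: eq_bigr => j _.
by rewrite /= map_mpolyZ map_mpolyX mevalZ mevalXU rmorphXn mulrC.
Qed.

Lemma perm_mulr n (G : seq 'M[RR]_n) a :
  is_finite_matrix_group G -> a \in G ->
  perm_eq [seq h *m a | h <- undup G] (undup G).
Proof.
move=> [G1 GU GM] aG.
have inj : injective (fun h : 'M[RR]_n => h *m a).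
  by move=> h1 h2 /(congr1 (mulmx^~ (invmx a))); rewrite !mulmxK ?GU.
have u1 : uniq [seq h *m a | h <- undup G] by rewrite map_inj_uniq ?undup_uniq.
have sub : {subset [seq h *m a | h <- undup G] <= undup G}.
  by move=> y /mapP [h hG ->]; rewrite mem_undup GM // -(mem_undup G).
apply: uniq_perm; rewrite ?undup_uniq //.
have [_ E] := uniq_min_size u1 sub (eq_leq (esym (size_map _ _))).
by [].
Qed.

Definition Fpoly n (G : seq 'M[RR]_n) (l : {mpoly RR[n]}) : {poly {mpoly RR[n]}} :=
  \prod_(h <- undup G) ('X - (mat_act h l)%:P).

Lemma Fpoly_inv n (G : seq 'M[RR]_n) l i :
  is_finite_matrix_group G -> is_invariant G (Fpoly G l)`_i.
Proof.
move=> HG a aG.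
rewrite mat_actE -(coef_map (comp_mpoly (tup a))) /Fpoly rmorph_prod.
apply: (congr1 (fun p : {poly {mpoly RR[n]}} => p`_i)).
rewrite (eq_bigr (fun h => 'X - (mat_act (h *m a) l)%:P)); last first.
  move=> h _.
  have -> : mat_act (h *m a) l = comp_mpoly (tup a) (mat_act h l) by rewrite -mat_act_comp.
  exact: (map_polyXsubC (comp_mpoly (tup a)) _).
rewrite -[RHS](perm_big _ (perm_mulr HG aG)) /=.
by rewrite big_map.
Qed.

Lemma mapXsubC_rm (R S : nzRingType) (f : {rmorphism R -> S}) c :
  (map_poly f : {rmorphism {poly R} -> {poly S}}) ('X - c%:P) = 'X - (f c)%:P.
Proof. exact: map_polyXsubC. Qed.

Lemma conj_root n (G : seq 'M[RR]_n) x l :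
  is_finite_matrix_group G ->
  (forall p, is_invariant G p -> (ceval x p)^*%C = ceval x p) ->
  exists2 h, h \in G & ceval (conjx x) l = ceval (mat_act_pt h x) l.
Proof.
move=> HG Hr.
pose Fx := map_poly (meval x) (map_poly (map_mpoly rc) (Fpoly G l)).
have coefFx i : Fx`_i = ceval x (Fpoly G l)`_i by rewrite !coef_map.
have FxE : Fx = \prod_(c <- [seq ceval x (mat_act h l) | h <- undup G]) ('X - c%:P).
  rewrite big_map /Fx /Fpoly !rmorph_prod; apply: eq_bigr => h _.
  by rewrite !mapXsubC_rm.
have Fxc : map_poly conjc Fx = Fx.
  apply/polyP => i; rewrite coef_map coefFx /=; exact: Hr (Fpoly_inv _ _ HG).
have : root Fx (ceval x l)^*%C.
  rewrite -Fxc complex_root_conj conjcK FxE root_prod_XsubC.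
  apply/mapP; exists 1%:M; first by rewrite mem_undup; case: HG.
  rewrite ceval_act /ceval; apply: meval_eq => j; by rewrite act_pt1.
rewrite FxE root_prod_XsubC => /mapP [h hG E].
exists h; first by rewrite -(mem_undup G).
by rewrite ceval_conj E ceval_act.
Qed.

Lemma orbit_conj n (G : seq 'M[RR]_n) x :
  is_finite_matrix_group G ->
  (forall p, is_invariant G p -> (ceval x p)^*%C = ceval x p) ->
  exists2 g, g \in G & mat_act_pt g x =1 conjx x.
Proof.
move=> HG Hr.
pose w h j := mat_act_pt h x j - conjx x j.
pose D h : {poly RR[i]} := \sum_(j < n) (w h j)%:P * 'X^j.
have DE h t : (D h).[t] = \sum_(j < n) w h j * t ^+ j.
  by rewrite /D horner_sum; apply: eq_bigr => j _; rewrite hornerCM hornerXn.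
have Dnz h : ~~ [forall j, w h j == 0] -> D h != 0.
  case/forallPn => j0 Hj0; apply/eqP => /(congr1 (fun p : {poly RR[i]} => p`_j0)).
  rewrite coef0 /D coef_sum (bigD1 j0) //= big1 ?addr0.
    by rewrite coefCM coefXn eqxx mulr1 => E; rewrite E eqxx in Hj0.
  move=> j jj0; rewrite coefCM coefXn.
  have -> : (j0 == j :> nat) = false by apply/negbTE; rewrite eq_sym.
  by rewrite mulr0.
pose P := \prod_(h <- undup G | ~~ [forall j, w h j == 0]) D h.
have Pnz : P != 0.
  by rewrite prodf_seq_neq0; apply/allP => h _; apply/implyP; exact: Dnz.
have [t Ht] := exists_nonroot Pnz.
have [h hG E] := conj_root (lin n t) HG Hr.
exists h => //.
case: (boolP [forall j, w h j == 0]) => [/forallP Hw j | Hw].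
  by apply/eqP; rewrite -subr_eq0; exact: Hw j.
exfalso; move: Ht; rewrite horner_prod prodf_seq_neq0 => /allP /(_ h).
rewrite mem_undup hG => /(_ isT); rewrite Hw /= DE /w.
rewrite !ceval_lin in E.
under eq_bigr do rewrite mulrBl.
by rewrite sumrB E subrr eqxx.
Qed.

Lemma act_pt_ext n (g : 'M[RR]_n) y1 y2 :
  y1 =1 y2 -> mat_act_pt g y1 =1 mat_act_pt g y2.
Proof. by move=> E i; apply: eq_bigr => j _; rewrite E. Qed.

Lemma ceval_ext n (y1 y2 : 'I_n -> RR[i]) p : y1 =1 y2 -> ceval y1 p = ceval y2 p.
Proof. by move=> E; apply: meval_eq. Qed.

Lemma real_of_conj (z : RR[i]) : z^*%C = z -> z = rc (complex.Re z).
Proof.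
case: z => a b /eqP; rewrite eq_complex /= => /andP [_ /eqP Hb].
have : b *+ 2 == 0 by rewrite mulr2n -{1}Hb addNr.
rewrite mulrn_eq0 /= => /eqP ->.
by [].
Qed.

Lemma cevalD n (y : 'I_n -> RR[i]) p q : ceval y (p + q) = ceval y p + ceval y q.
Proof. by rewrite /ceval [map_mpoly _ _]raddfD mevalD. Qed.

Lemma cevalM n (y : 'I_n -> RR[i]) p q : ceval y (p * q) = ceval y p * ceval y q.
Proof. by rewrite /ceval [map_mpoly _ _]rmorphM mevalM. Qed.

Lemma ceval1 n (y : 'I_n -> RR[i]) : ceval y 1 = 1.
Proof. by rewrite /ceval [map_mpoly _ _]rmorph1 meval1. Qed.

Theorem lemma3p5 (n : nat) (G H : seq 'M[RR]_n) (phi : {mpoly RR[n]} -> RR) :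
  is_finite_matrix_group G ->
  broad G H ->
  ring_hom_on_invariants G phi ->
  principal_orbit_type G phi ->
  exists psi : {mpoly RR[n]} -> RR,
    ring_hom_on_invariants H psi /\
    (forall p, is_invariant G p -> psi p = phi p).
Proof.
move=> HG [[HH HHG] _ Hbroad] _ [x [Hx Hstab]].
have Hr : forall p, is_invariant G p -> (ceval x p)^*%C = ceval x p.
  by move=> p Hp; rewrite Hx //; exact: conj_rc.
have [g gG Hg] := orbit_conj HG Hr.
have [G1 GU GM] := HG.
have gg : g *m g = 1%:M.
  apply: Hstab; first exact: GM.
  move=> i; rewrite act_pt_mul (act_pt_ext g Hg) act_pt_conj /conjx Hg.
  exact: conjcK.
have [y [h [k [hH kG Hhy Hky]]]] : exists y h k, [/\ h \in H, k \in G,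
    mat_act_pt h y =1 conjx y & mat_act_pt k y =1 x].
  case: (g =P 1%:M) => [g1 | gn1].
    exists x, 1%:M, 1%:M; split => //; first by case: HH.
      by move=> i; rewrite act_pt1 -Hg g1 act_pt1.
    exact: act_pt1.
  have [k kG hH] := Hbroad g gG (conj gg gn1).
  have ku := GU k kG.
  exists (mat_act_pt (invmx k) x), (invmx k *m g *m k), k; split => //.
    move=> i; rewrite act_pt_mul.
    rewrite (act_pt_ext _ (fun j => esym (act_pt_mul k (invmx k) x j))).
    rewrite mulmxV // (act_pt_ext _ (act_pt1 x)) act_pt_mul.
    by rewrite (act_pt_ext _ Hg) act_pt_conj.
  by move=> i; rewrite -act_pt_mul mulmxV // act_pt1.
have Hreal p : is_invariant H p -> ceval y p = rc (complex.Re (ceval y p)).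
  move=> Hp; apply: real_of_conj.
  by rewrite -ceval_conj -(ceval_ext p Hhy) -ceval_act Hp.
exists (fun p => complex.Re (ceval y p)); split; first split.
- by rewrite ceval1.
- by move=> p q _ _; rewrite cevalD; case: (ceval y p); case: (ceval y q).
- move=> p q Hp Hq; rewrite cevalM (Hreal p Hp) (Hreal q Hq) -rmorphM.
  by [].
- move=> p Hp.
  by rewrite -{1}(Hp k kG) ceval_act (ceval_ext p Hky) Hx.
Qed.
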